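(* Let $P\subset\mathbb R^d$ be a $d$-polytope with $d\geq 3$, let $S$ be a simplex facet of $P$ in bounded position, and let $\mathcal F,\mathcal N\subseteq\operatorname{adj}(S)$ be disjoint with $\mathcal F$ nonsimple. Let $v\in V_S(\mathcal F,\mathcal N;P)$ and $Q=\operatorname{conv}(P\cup\{v\})$. Then for $0\leq k\leq d-2$, a $k$-face $G$ of $P$ is a $k$-face of $Q$ if and only if there is a facet $F$ of $P$ with $F\notin\mathcal F\cup\mathcal N\cup\{S\}$ and $G\subseteq F$.
   Context: For a facet $F$ of a $d$-polytope $P\subset\mathbb R^d$ let $H_F=\{x:\langle x,a_F\rangle=\ell_F\}$ be its affine hull, oriented so that $P\subseteq\{x:\langle x,a_F\rangle\geq \ell_F\}$; put $H_F^+=\{x:\langle x,a_F\rangle>\ell_F\}$, $H_F^-=\{x:\langle x,a_F\rangle<\ell_F\}$. Two facets are adjacent if they share a ridge ($(d-2)$-face); $\operatorname{adj}(S)$ is the set of facets adjacent to the facet $S$. A simplex facet is a facet combinatorially equivalent to a $(d-1)$-simplex. A facet $S$ is in bounded position if for every set of $d$ facets in $\operatorname{adj}(S)$ the hyperplanes $H_F$ of these facets intersect in a point of $H_S^-$. A subset $\mathcal F\subseteq\operatorname{adj}(S)$ is nonsimple if there is no pair of adjacent facets $G,G'\in\mathcal F$ having a common $(d-3)$-face with $S$. For disjoint $\mathcal F,\mathcal N\subseteq\operatorname{adj}(S)$, $V_S(\mathcal F,\mathcal N;P)$ is the set of points lying in $H_F^-$ for all $F\in\mathcal N\cup\{S\}$,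 in $H_F$ for all $F\in\mathcal F$, and in $H_F^+$ for all other facets $F$ of $P$. (The polytope $Q$ is called the pseudo-stacking of $P$ above $S$ with respect to $\mathcal F,\mathcal N$.) *)

(* Defs.v *)
From HB Require Import structures.
From mathcomp Require Import all_boot all_order all_algebra.
From mathcomp Require Import boolp classical_sets.
Set Implicit Arguments. Unset Strict Implicit. Unset Printing Implicit Defensive.
Import Order.TTheory GRing.Theory Num.Theory.
Local Open Scope ring_scope.
Local Open Scope classical_set_scope.

Section Polytopes.
Variables (R : realFieldType) (d : nat).
Local Notation pt := 'rV[R]_d.

Definition dotv (x a : pt) : R := \sum_(i < d) x ord0 i * a ord0 i.

Definition conv (V : seq pt) : set pt :=
  [set x | exists l : 'I_(size V) -> R,
     (forall i, 0 <= l i) /\ \sum_i l i = 1 /\ x = \sum_i l i *: V`_i].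

Definition aff_indep (W : seq pt) : bool :=
  \rank (\matrix_(i < (size W).-1) (W`_i.+1 - W`_0)) == (size W).-1.

Definition affdim (A : set pt) (k : nat) : Prop :=
  (exists W : seq pt, size W = k.+1 /\ (forall x, x \in W -> A x) /\ aff_indep W) /\
  (forall W : seq pt, size W = k.+2 -> (forall x, x \in W -> A x) -> ~~ aff_indep W).

(* faces of P: intersections of P with valid inequalities (incl. P and the empty set) *)
Definition isface (P G : set pt) : Prop :=
  exists (a : pt) (b : R), (forall x, P x -> b <= dotv x a) /\
    G = P `&` [set x | dotv x a = b].

Definition kface (P : set pt) (k : nat) (G : set pt) : Prop :=
  isface P G /\ affdim G k.

Definition polytope_dim (P : set pt) (n : nat) : Prop := affdim P n.

Definition facet (P F : set pt) : Prop := kface P d.-1 F.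

Definition adjacent (P F F' : set pt) : Prop :=
  facet P F /\ facet P F' /\ F <> F' /\
  exists Rg, kface P (d - 2) Rg /\ Rg `<=` F /\ Rg `<=` F'.

Definition adj (P S : set pt) : set (set pt) := [set F | adjacent P S F].

Definition simplex_facet (P S : set pt) : Prop :=
  facet P S /\ exists W : seq pt, size W = d /\ aff_indep W /\ S = conv W.

(* (a, l) defines the oriented hyperplane H_F of the facet F:
   F = P ∩ {<x,a> = l} and P ⊆ {<x,a> >= l} *)
Definition supp (P F : set pt) (a : pt) (l : R) : Prop :=
  a != 0 /\ (forall x, P x -> l <= dotv x a) /\ F = P `&` [set x | dotv x a = l].

Definition Hplane (P F : set pt) (x : pt) : Prop :=
  exists a l, supp P F a l /\ dotv x a = l.
Definition Hplus (P F : set pt) (x : pt) : Prop :=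
  exists a l, supp P F a l /\ l < dotv x a.
Definition Hminus (P F : set pt) (x : pt) : Prop :=
  exists a l, supp P F a l /\ dotv x a < l.

Definition bounded_position (P S : set pt) : Prop :=
  forall Fs : 'I_d -> set pt, injective Fs -> (forall i, adj P S (Fs i)) ->
    exists x, (forall i, Hplane P (Fs i) x) /\ Hminus P S x /\
      (forall y, (forall i, Hplane P (Fs i) y) -> y = x).

Definition nonsimple (P S : set pt) (FF : set (set pt)) : Prop :=
  ~ exists G G', FF G /\ FF G' /\ adjacent P G G' /\
      exists K, kface P (d - 3) K /\ K `<=` G /\ K `<=` G' /\ K `<=` S.

Definition VS (P S : set pt) (FF NN : set (set pt)) : set pt :=
  [set x | Hminus P S x /\ (forall F, NN F -> Hminus P F x) /\
           (forall F, FF F -> Hplane P F x) /\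
           (forall F, facet P F -> ~ FF F -> ~ NN F -> F <> S -> Hplus P F x)].

End Polytopes.

(* Main.v *)
Require Import Defs.
From HB Require Import structures.
From mathcomp Require Import all_boot all_order all_algebra.
From mathcomp Require Import boolp classical_sets.
From mathcomp Require Import zify ring lra.
Import Order.TTheory GRing.Theory Num.Theory.
Local Open Scope ring_scope.
Local Open Scope classical_set_scope.
Set Implicit Arguments. Unset Strict Implicit. Unset Printing Implicit Defensive.

Section Aux.
Variables (R : realFieldType) (d : nat).
Local Notation pt := 'rV[R]_d.
Local Notation dotv := (@dotv R d).
Local Notation conv := (@conv R d).

Lemma dotvE (x a : pt) : dotv x a = (x *m a^T) 0 0.
Proof. by rewrite /Defs.dotv !mxE; apply: eq_bigr => i _; rewrite mxE. Qed.

Lemma dotvDl x y a : dotv (x + y) a = dotv x a + dotv y a.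
Proof. by rewrite !dotvE mulmxDl mxE. Qed.
Lemma dotvZl t x a : dotv (t *: x) a = t * dotv x a.
Proof. by rewrite !dotvE -scalemxAl mxE. Qed.
Lemma dotvNl x a : dotv (- x) a = - dotv x a.
Proof. by rewrite !dotvE mulNmx mxE. Qed.
Lemma dotvBl x y a : dotv (x - y) a = dotv x a - dotv y a.
Proof. by rewrite dotvDl dotvNl. Qed.
Lemma dotv0l a : dotv 0 a = 0.
Proof. by rewrite dotvE mul0mx mxE. Qed.
Lemma dotv_suml (I : finType) (F : I -> pt) a : dotv (\sum_i F i) a = \sum_i dotv (F i) a.
Proof.
rewrite dotvE mulmx_suml summxE; apply: eq_bigr => i _; by rewrite dotvE.
Qed.
Lemma dotvDr x a b : dotv x (a + b) = dotv x a + dotv x b.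
Proof. by rewrite !dotvE linearD /= mulmxDr mxE. Qed.
Lemma dotvZr t x a : dotv x (t *: a) = t * dotv x a.
Proof. by rewrite !dotvE linearZ /= -scalemxAr mxE. Qed.
Lemma dotv0r x : dotv x 0 = 0.
Proof. by rewrite dotvE linear0 mulmx0 mxE. Qed.

Lemma conv_mem (V : seq pt) p : p \in V -> conv V p.
Proof.
move=> pV; have ip : (index p V < size V)%N by rewrite index_mem.
exists (fun i : 'I_(size V) => (i == Ordinal ip)%:R); split; first by move=> i; rewrite ler0n.
split.
  by rewrite (bigD1 (Ordinal ip)) //= eqxx big1 ?addr0 // => i /negbTE ->.
rewrite (bigD1 (Ordinal ip)) //= eqxx scale1r big1 ?addr0 ?nth_index //.
by move=> i /negbTE ->; rewrite scale0r.
Qed.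

Lemma conv_dot (V : seq pt) x a (l : 'I_(size V) -> R) :
  \sum_i l i = 1 -> x = \sum_i l i *: V`_i ->
  dotv x a = \sum_i l i * dotv V`_i a.
Proof. by move=> _ ->; rewrite dotv_suml; apply: eq_bigr => i _; rewrite dotvZl. Qed.

Lemma conv_ge (V : seq pt) a b x :
  (forall p, p \in V -> b <= dotv p a) -> conv V x -> b <= dotv x a.
Proof.
move=> H [l [l0 [l1 ->]]].
rewrite (conv_dot a l1 (erefl _)) -[b]mul1r -l1 mulr_suml.
apply: ler_sum => i _; apply: ler_wpM2l => //; apply: H; exact: mem_nth.
Qed.

Lemma conv_eq (V : seq pt) a b x :
  (forall p, p \in V -> dotv p a = b) -> conv V x -> dotv x a = b.
Proof.
move=> H [l [l0 [l1 ->]]].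
rewrite (conv_dot a l1 (erefl _)) -[RHS]mul1r -l1 mulr_suml.
by apply: eq_bigr => i _; rewrite H // mem_nth.
Qed.


Lemma conv_tight (W : seq pt) a b x (l : 'I_(size W) -> R) :
  (forall p, p \in W -> b <= dotv p a) -> (forall i, 0 <= l i) ->
  \sum_i l i = 1 -> x = \sum_i l i *: W`_i -> dotv x a = b ->
  forall i, l i != 0 -> dotv W`_i a = b.
Proof.
move=> H l0 l1 xE xb.
have S0 : \sum_i l i * (dotv W`_i a - b) = 0.
  under eq_bigr => i _ do rewrite mulrBr.
  by rewrite sumrB -(conv_dot a l1 xE) -mulr_suml l1 mul1r xb subrr.
have := psumr_eq0P (P := predT) _ S0 => /= H2 i li.
have /eqP := H2 (fun i _ => mulr_ge0 (l0 i) (eq_ind_r is_true (H _ (mem_nth 0 (ltn_ord i))) (subr_ge0 _ _))) i isT.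
by rewrite mulf_eq0 (negbTE li) /= subr_eq0 => /eqP.
Qed.

Definition mxf n (f : nat -> pt) : 'M[R]_(n, d) := \matrix_(i < n) f i.

Lemma rowmxf n f (i : 'I_n) : row i (mxf n f) = f i.
Proof. exact: rowK. Qed.

Lemma nzrow m n (K : 'M[R]_(m, n)) : K != 0 -> exists i, row i K != 0.
Proof.
move=> K0; apply/not_existsP => H; move/eqP: K0; apply; apply/row_matrixP => i.
by rewrite row0; apply/eqP; apply/negPn/negP => /(H i).
Qed.

Lemma hyper_rank n f (a : pt) : a != 0 ->
  (forall i, (i < n)%N -> dotv (f i) a = 0) -> (\rank (mxf n f) <= d.-1)%N.
Proof.
move=> a0 H.
have : (mxf n f <= kermx a^T)%MS.
  apply/sub_kermxP; apply/row_matrixP => i; rewrite row_mul rowmxf row0.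
  apply/rowP => j; rewrite ord1 -dotvE H ?mxE //.
move/mxrankS; rewrite mxrank_ker mxrank_tr rank_rV a0 subn1 //.
Qed.

Lemma mulmxf n (u : 'rV[R]_n) f : u *m mxf n f = \sum_i u 0 i *: f i.
Proof. by rewrite mulmx_sum_row; apply: eq_bigr => i _; rewrite rowmxf. Qed.

Lemma indS n f : \rank (mxf n f) == n -> \rank (mxf n.+1 f) != n.+1 ->
  exists mu : 'I_n -> R, f n = \sum_i mu i *: f i.
Proof.
move=> Hn Hn1.
have : kermx (mxf n.+1 f) != 0 by rewrite kermx_eq0.
case/nzrow => k.
have : row k (kermx (mxf n.+1 f)) *m mxf n.+1 f = 0 by apply/sub_kermxP; exact: row_sub.
move: (row k _) => u.
rewrite mulmxf big_ord_recr /= => E u0.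
have [um0|um0] := eqVneq (u 0 ord_max) 0.
  pose u' := \row_(i < n) u 0 (widen_ord (leqnSn n) i).
  have : u' *m mxf n f == 0.
    have E' : \sum_(i < n) u 0 (widen_ord (leqnSn n) i) *: f i = 0.
      by move: E; rewrite um0 scale0r addr0.
    rewrite mulmxf; apply/eqP; rewrite -[RHS]E'; apply: eq_bigr => i _; rewrite mxE.
    done.
  move=> /eqP H0; have u'0 : u' = 0 by apply/eqP; rewrite -(mulmx_free_eq0 _ Hn); apply/eqP.
  case/negP: u0; apply/eqP/rowP => j; rewrite mxE.
  have [jn|jn] := ltnP j n.
    have := congr1 (fun A : 'rV[R]_n => A 0 (Ordinal jn)) u'0; rewrite !mxE.
    by move=> <-; congr (u 0 _); apply: val_inj.
  have -> : j = ord_max by apply: val_inj; apply/eqP; rewrite eqn_leq jn -ltnS ltn_ord.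
  by rewrite um0.
exists (fun i => - (u 0 (widen_ord (leqnSn n) i) / u 0 ord_max)).
apply: (scalerI um0).
move/eqP: E; rewrite addrC addr_eq0 => /eqP ->.
rewrite scaler_sumr -sumrN; apply: eq_bigr => i _.
rewrite scalerA mulrN mulrCA divff // mulr1 scaleNr //.
Qed.

Lemma kerex n f : (n < d)%N -> exists z : pt, (z != 0) /\ (forall i, (i < n)%N -> dotv (f i) z = 0).
Proof.
move=> nd.
have : kermx (mxf n f)^T != 0.
  rewrite kermx_eq0 /row_free mxrank_tr; apply/negP => /eqP E.
  by have := rank_leq_row (mxf n f); rewrite E leqNgt nd.
case/nzrow => k.
have : row k (kermx (mxf n f)^T) *m (mxf n f)^T = 0 by apply/sub_kermxP; exact: row_sub.
move: (row k _) => z Hz z0; exists z; split => // i ni; move: Hz.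
move/(congr1 (fun A : 'rV[R]_n => A 0 (Ordinal ni))); rewrite !mxE => <-.
rewrite /Defs.dotv; apply: eq_bigr => j _; rewrite !mxE mulrC //.
Qed.


Lemma eq_mxf n f g : (forall i, (i < n)%N -> f i = g i) -> mxf n f = mxf n g.
Proof. by move=> H; apply/row_matrixP => i; rewrite !rowmxf H. Qed.

Lemma aff_indepE (W : seq pt) :
  aff_indep W = (\rank (mxf (size W).-1 (fun i => W`_i.+1 - W`_0)) == (size W).-1).
Proof. by []. Qed.

Lemma aff_hyper (W : seq pt) a l : (0 < d)%N -> a != 0 ->
  (forall w, w \in W -> dotv w a = l) -> (d <= (size W).-1)%N -> ~~ aff_indep W.
Proof.
move=> d0 a0 H sW; rewrite aff_indepE.
have sW0 : (0 < size W)%N by lia.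
have : (\rank (mxf (size W).-1 (fun i => (W`_i.+1 - W`_0)%R)) <= d.-1)%N.
  apply: (hyper_rank a0) => i iW.
  rewrite dotvBl !H ?subrr // mem_nth //; move: iW sW0; case: (size W) => //.
move=> Hr; apply/negP => /eqP E; move: Hr; rewrite E.
lia.
Qed.

Lemma aff_ext w0 (W' : seq pt) p : aff_indep (w0 :: W') -> ~~ aff_indep (rcons (w0 :: W') p) ->
  exists mu : 'I_(size W') -> R, p - w0 = \sum_i mu i *: (W'`_i - w0).
Proof.
rewrite !aff_indepE /= size_rcons /= => H1 H2.
have E : mxf (size W') (fun i => W'`_i - w0) = mxf (size W') (fun i => (rcons W' p)`_i - w0).
  by apply: eq_mxf => i iW; rewrite nth_rcons iW.
rewrite E in H1.
have [mu Hmu] := indS H1 H2.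
exists mu; move: Hmu; rewrite nth_rcons ltnn eqxx => ->.
by apply: eq_bigr => i _; rewrite nth_rcons ltn_ord.
Qed.

Lemma aff_single (p : pt) : aff_indep [:: p].
Proof. by rewrite aff_indepE /= -leqn0 rank_leq_row. Qed.

Lemma aff_span_z (W : seq pt) p z zl : aff_indep W -> ~~ aff_indep (rcons W p) ->
  (forall w, w \in W -> dotv w z = zl) -> dotv p z = zl.
Proof.
case: W => [|w0 W']; first by rewrite aff_single.
move=> H1 H2 Hw; have [mu Hmu] := aff_ext H1 H2.
have : dotv (p - w0) z = 0.
  rewrite Hmu dotv_suml big1 // => i _.
  by rewrite dotvZl dotvBl (Hw w0) ?mem_head // (Hw W'`_i) ?subrr ?mulr0 // in_cons mem_nth ?orbT.
by rewrite dotvBl (Hw w0) ?mem_head // => /eqP; rewrite subr_eq0 => /eqP.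
Qed.

Lemma seq_argmin (T : eqType) (s : seq T) (P : pred T) (F : T -> R) :
  (exists x, x \in s /\ P x) ->
  exists x, [/\ x \in s, P x & forall y, y \in s -> P y -> F x <= F y].
Proof.
elim: s => [|x s IH] [y [ys Py]]; first by [].
have [Hs|Hs] := pselect (exists x, x \in s /\ P x).
  have [m [ms Pm Hm]] := IH Hs.
  case Px: (P x); last first.
    exists m; split => //; first by rewrite in_cons ms orbT.
    by move=> z; rewrite in_cons => /orP [/eqP ->|zs]; [rewrite Px|exact: Hm].
  have [le|lt] := leP (F x) (F m).
    exists x; split => //; first exact: mem_head.
    by move=> z; rewrite in_cons => /orP [/eqP ->//|zs Pz]; apply: le_trans le (Hm z zs Pz).
  exists m; split => //; first by rewrite in_cons ms orbT.
  move=> z; rewrite in_cons => /orP [/eqP -> _|zs]; [exact: ltW|exact: Hm].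
have Px : P x.
  move: ys; rewrite in_cons => /orP [/eqP <- //|ys]; case: Hs; by exists y.
exists x; split => //; first exact: mem_head.
move=> z; rewrite in_cons => /orP [/eqP -> //|zs Pz]; case: Hs; by exists z.
Qed.


Lemma dotvNr x a : dotv x (- a) = - dotv x a.
Proof. by rewrite -scaleN1r dotvZr mulN1r. Qed.

Definition inv (V : seq pt) v c b a l (W : seq pt) :=
  [/\ forall p, p \in V -> l <= dotv p a,
      forall p, p \in V -> dotv p c = b -> dotv p a = l,
      l < dotv v a, aff_indep W &
      forall w, w \in W -> w \in V /\ dotv w a = l].

Lemma pivot_step (V : seq pt) v c b
  (HW : forall z zl, z != 0 -> exists2 p, p \in V & dotv p z != zl) a l W :
  (size W < d)%N -> (0 < size W)%N -> inv V v c b a l W ->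
  exists a' l' W', size W' = (size W).+1 /\ inv V v c b a' l' W'.
Proof.
move=> sWd sW0 [I1 I2 I3 I4 I5].
have [[p [pV [ptight pind]]] | noext] :=
  pselect (exists p, p \in V /\ dotv p a = l /\ aff_indep (rcons W p)).
  exists a, l, (rcons W p); split; first by rewrite size_rcons.
  split => // w; rewrite mem_rcons in_cons => /orP [/eqP -> //|]; exact: I5.
have [z [z0 Hz]] := kerex (fun i => W`_i - v) sWd.
have HzW : forall w, w \in W -> dotv w z = dotv v z.
  move=> w /(nthP 0) [i iW <-]; have := Hz i iW.
  by rewrite dotvBl => /eqP; rewrite subr_eq0 => /eqP.
have HzT : forall p, p \in V -> dotv p a = l -> dotv p z = dotv v z.
  move=> p pV pl; apply: (aff_span_z I4) HzW; apply/negP => H; apply: noext.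
  by exists p.
have [z' [Hz'W [Hz'T [p2 [p2V p2lt]]]]] : exists z',
    (forall w, w \in W -> dotv w z' = dotv v z') /\
    (forall p, p \in V -> dotv p a = l -> dotv p z' = dotv v z') /\
    exists p, p \in V /\ dotv p z' < dotv v z'.
  have [p1 p1V p1n] := HW z (dotv v z) z0.
  case: (ltgtP (dotv p1 z) (dotv v z)) p1n => // h _.
    by exists z; split => //; split => //; exists p1.
  exists (- z); split.
    by move=> w wW; rewrite !dotvNr HzW.
  split; first by move=> p pV pl; rewrite !dotvNr HzT.
  by exists p1; split => //; rewrite !dotvNr ltrN2.
set zl := dotv v z' in Hz'W Hz'T p2lt.
have [ps [psV pslt psmin]] := @seq_argmin _ V (fun p => dotv p z' < zl)
  (fun p => (dotv p a - l) / (zl - dotv p z')) (ex_intro _ p2 (conj p2V p2lt)).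
set t := (dotv ps a - l) / (zl - dotv ps z') in psmin.
have Dps : 0 < zl - dotv ps z' by rewrite subr_gt0.
have t0 : 0 <= t by rewrite divr_ge0 // ?subr_ge0 ?I1 // ltW.
have dE : forall x, dotv x (a + t *: z') = dotv x a + t * dotv x z'.
  by move=> x; rewrite dotvDr dotvZr.
exists (a + t *: z'), (l + t * zl), (rcons W ps); split; first by rewrite size_rcons.
split.
- move=> p pV; rewrite dE.
  have [plt|pge] := ltP (dotv p z') zl.
    have := psmin p pV plt; rewrite ler_pdivlMr ?subr_gt0 // => h.
    have := I1 p pV; lra.
  have := I1 p pV; have : t * zl <= t * dotv p z' by rewrite ler_wpM2l.
  lra.
- by move=> p pV pc; rewrite dE I2 // Hz'T // I2.
- by rewrite dE /zl; have := I3; lra.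
- apply: contraT => H; have := aff_span_z I4 H Hz'W.
  by move=> E; move: pslt; rewrite E ltxx.
- move=> w; rewrite mem_rcons in_cons => /orP [/eqP ->|wW].
    split => //; rewrite dE.
    have tE : t * (zl - dotv ps z') = dotv ps a - l by rewrite /t divfK // lt0r_neq0.
    move: tE; rewrite mulrBr; lra.
  by have [wV wt] := I5 w wW; split => //; rewrite dE wt Hz'W.
Qed.


Lemma pivot_loop (V : seq pt) v c b
  (HW : forall z zl, z != 0 -> exists2 p, p \in V & dotv p z != zl) p0 :
  p0 \in V -> dotv p0 c = b -> (forall p, p \in V -> b <= dotv p c) -> b < dotv v c ->
  forall n, (n < d)%N -> exists a l W, size W = n.+1 /\ inv V v c b a l W.
Proof.
move=> p0V p0c Hb Hv; elim => [|n IH] nd.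
  exists c, b, [:: p0]; split => //; split => //; first exact: aff_single.
  by move=> w; rewrite mem_seq1 => /eqP ->.
have [a [l [W [sW HI]]]] := IH (ltnW nd).
have := @pivot_step V v c b HW a l W; rewrite sW => /(_ nd isT HI) [a' [l' [W' [sW' HI']]]].
by exists a', l', W'.
Qed.

Lemma full_HW (V : seq pt) : (0 < d)%N -> polytope_dim (conv V) d ->
  forall z zl, z != 0 -> exists2 p, p \in V & dotv p z != zl.
Proof.
move=> d0 [[W [sW [WP Wind]]] _] z zl z0.
case: (pselect (exists2 p, p \in V & dotv p z != zl)) => // H; exfalso.
move: Wind; apply/negP.
apply: (aff_hyper (a := z) (l := zl)) => //; last by rewrite sW.
move=> w /WP; apply: conv_eq => p pV; apply/eqP/negP => /negP pn.
by apply: H; exists p.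
Qed.

Lemma orth_ker n f (a : pt) : (forall i, (i < n)%N -> dotv (f i) a = 0) ->
  (a <= kermx (mxf n f)^T)%MS.
Proof.
move=> H; apply/sub_kermxP; apply/rowP => j; rewrite !mxE -[RHS](H j (ltn_ord j)).
by rewrite /Defs.dotv; apply: eq_bigr => k _; rewrite !mxE mulrC.
Qed.

Lemma supp_unique (P F : set pt) a l a' l' : (0 < d)%N -> polytope_dim P d ->
  facet P F -> supp P F a l -> supp P F a' l' ->
  exists t, [/\ 0 < t, a' = t *: a & l' = t * l].
Proof.
move=> d0 [[W0 [sW0 [W0P W0ind]]] _] [_ [[W [sW [WF Wind]]] _]] [a0 [Ha FE]] [a'0 [Ha' FE']].
have tight : forall (a : pt) l, F = P `&` [set x | dotv x a = l] ->
    forall w, w \in W -> dotv w a = l.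
  by move=> a1 l1 E w /WF; rewrite E => -[].
have sW1 : (0 < size W)%N by rewrite sW.
pose f := fun i => W`_i.+1 - W`_0.
have orth : forall (a : pt) l, F = P `&` [set x | dotv x a = l] ->
    (a <= kermx (mxf (size W).-1 f)^T)%MS.
  move=> a1 l1 E; apply: orth_ker => i iW.
  rewrite /f dotvBl !(tight a1 l1 E) ?subrr // mem_nth //.
  by move: iW; case: (size W) sW1.
have rK : \rank (kermx (mxf (size W).-1 f)^T) = 1%N.
  rewrite mxrank_ker mxrank_tr; move: Wind; rewrite aff_indepE => /eqP ->.
  by rewrite sW /=; lia.
have aK : (a == kermx (mxf (size W).-1 f)^T)%MS.
  by rewrite -(mxrank_leqif_eq (orth a l FE)).2 rK rank_rV a0.
have : (a' <= a)%MS.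
  by apply: submx_trans (orth a' l' FE') _; case/andP: aK.
case/submxP => D a'E.
have a'E2 : a' = D 0 0 *: a by rewrite a'E {1}[D]mx11_scalar mul_scalar_mx.
have l'E : l' = D 0 0 * l.
  by rewrite -(tight a' l' FE' W`_0) ?mem_nth // a'E2 dotvZr (tight a l FE) ?mem_nth.
exists (D 0 0); split => //.
have [x xW0 xn] : exists2 x, x \in W0 & dotv x a != l.
  case: (pselect (exists2 x, x \in W0 & dotv x a != l)) => // H; exfalso.
  move: W0ind; apply/negP.
  apply: (aff_hyper (a := a) (l := l)) => //; last by rewrite sW0.
  move=> w wW; apply/eqP/negP => /negP wn; by apply: H; exists w.
have xl : l < dotv x a by rewrite lt_def xn (Ha x (W0P x xW0)).
have := Ha' x (W0P x xW0); rewrite a'E2 l'E dotvZr -subr_ge0 -mulrBr.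
rewrite pmulr_lge0 ?subr_gt0 // le_eqVlt => /orP [/eqP D0|//].
by move: a'0; rewrite a'E2 -D0 scale0r eqxx.
Qed.


Lemma beneath_facet (V : seq pt) v c b p0 : (0 < d)%N -> polytope_dim (conv V) d ->
  (forall p, p \in V -> b <= dotv p c) -> b < dotv v c -> p0 \in V -> dotv p0 c = b ->
  exists a l, [/\ supp (conv V) (conv V `&` [set x | dotv x a = l]) a l,
    facet (conv V) (conv V `&` [set x | dotv x a = l]), l < dotv v a &
    forall p, p \in V -> dotv p c = b -> dotv p a = l].
Proof.
move=> d0 Hfull Hb Hv p0V p0c.
have HW := full_HW d0 Hfull.
have [a [l [W [sW [I1 I2 I3 I4 I5]]]]] :=
  pivot_loop HW p0V p0c Hb Hv (ltac:(by rewrite ltn_predL) : (d.-1 < d)%N).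
have sWd : size W = d by rewrite sW prednK.
have W0 : W`_0 \in W by rewrite mem_nth // sWd.
have a0 : a != 0.
  apply/eqP => a0; have := (I5 _ W0).2; rewrite a0 dotv0r => l0.
  by move: I3; rewrite a0 dotv0r l0 ltxx.
have Hsupp : supp (conv V) (conv V `&` [set x | dotv x a = l]) a l.
  by split => //; split => // x; apply: conv_ge => p pV; exact: I1.
exists a, l; split => //.
split; first by exists a, l; case: Hsupp => _ [].
split.
  exists W; split => //; split => // x xW.
  by have [xV xt] := I5 x xW; split => //; exact: conv_mem.
move=> W' sW' W'F; apply: (aff_hyper (a := a) (l := l)) => //.
  by move=> w /W'F [].
by rewrite sW' /= prednK.
Qed.

Lemma conv_cons_sub (V : seq pt) v x : conv V x -> conv (v :: V) x.
Proof.
move=> [l [l0 [l1 xE]]].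
exists (fun i : 'I_(size V).+1 => oapp l 0 (unlift ord0 i)); split.
  by move=> i; case: (unlift ord0 i) => //= j.
rewrite !big_ord_recl unlift_none /= add0r scale0r add0r; split.
  by rewrite -l1; apply: eq_bigr => i _; rewrite liftK.
by rewrite xE; apply: eq_bigr => i _; rewrite liftK.
Qed.

Lemma conv_cons_inv (V : seq pt) v x (l : 'I_(size V).+1 -> R) :
  (forall i, 0 <= l i) -> \sum_i l i = 1 -> x = \sum_i l i *: (v :: V)`_i ->
  l ord0 = 0 -> conv V x.
Proof.
move=> l0 l1 xE lv; exists (fun i => l (lift ord0 i)); split => //.
move: l1 xE; rewrite !big_ord_recl lv add0r scale0r add0r; split => //.
Qed.

End Aux.

Unset Implicit Arguments.
Set Strict Implicit.

Theorem theorem2p11 (R : realFieldType) (d : nat) (V : seq 'rV[R]_d)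
    (S : set 'rV[R]_d) (FF NN : set (set 'rV[R]_d)) (v : 'rV[R]_d) :
  (3 <= d)%N ->
  polytope_dim (conv V) d ->
  simplex_facet (conv V) S ->
  bounded_position (conv V) S ->
  FF `<=` adj (conv V) S -> NN `<=` adj (conv V) S -> FF `&` NN = set0 ->
  nonsimple (conv V) S FF ->
  VS (conv V) S FF NN v ->
  forall (k : nat) (G : set 'rV[R]_d), (k <= d - 2)%N -> kface (conv V) k G ->
    (kface (conv (v :: V)) k G <->
     exists F, facet (conv V) F /\ ~ FF F /\ ~ NN F /\ F <> S /\ G `<=` F).
Proof.
move=> d3 Hfull _ _ _ _ _ _ [HS [HNN [HFF Hoth]]] k G _ [[c [b [Hcb GE]]] Gdim].
have d0 : (0 < d)%N by lia.
have vQ : conv (v :: V) v by apply: conv_mem; exact: mem_head.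
have VQ : forall p, p \in V -> conv (v :: V) p.
  by move=> p pV; apply: conv_mem; rewrite in_cons pV orbT.
have vP : ~ conv V v.
  case: HS => aS [lS [[_ [HaS _]] vS]] /HaS; by rewrite leNgt vS.
split.
  move=> [[c' [b' [Hq GEq]]] _].
  have Hb' : forall p, p \in V -> b' <= dotv p c' by move=> p /VQ /Hq.
  have Hv : b' < dotv v c'.
    rewrite lt_def Hq // andbT; apply/eqP => E; apply: vP.
    have : G v by rewrite GEq.
    by rewrite GE => -[].
  have Gtight : forall x, G x -> exists l : 'I_(size V) -> R,
      [/\ (forall i, 0 <= l i), \sum_i l i = 1, x = \sum_i l i *: V`_i &
          forall i, l i != 0 -> dotv V`_i c' = b'].
    move=> x Gx; have := Gx; rewrite GE => -[[l [l0 [l1 xE]]] _].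
    exists l; split => //; apply: (conv_tight Hb' l0 l1 xE).
    by move: Gx; rewrite GEq => -[].
  have [x Gx] : exists x, G x.
    case: Gdim => -[W [sW [WG _]]] _; exists W`_0; apply: WG; by rewrite mem_nth // sW.
  have [l [l0 l1 xE lt]] := Gtight x Gx.
  have [i li] : exists i, l i != 0.
    case: (pselect (exists i, l i != 0)) => // H; exfalso.
    move: l1; rewrite big1 => [/eqP|i _]; first by rewrite eq_sym oner_eq0.
    by apply/eqP/negP => /negP li; apply: H; exists i.
  have [a [al [Hsupp Hfacet Hval Htight]]] :=
    beneath_facet (p0 := V`_i) d0 Hfull Hb' Hv (mem_nth 0 (ltn_ord i)) (lt i li).
  exists (conv V `&` [set x | dotv x a = al]); split => //.
  have key : forall a' l', supp (conv V) (conv V `&` [set x | dotv x a = al]) a' l' ->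
      exists t, [/\ 0 < t, dotv v a' = t * dotv v a & l' = t * al].
    move=> a' l' H'; have [t [t0 -> ->]] := supp_unique d0 Hfull Hfacet Hsupp H'.
    by exists t; rewrite dotvZr.
  split.
    move=> /HFF [a' [l' [H' E]]]; have [t [t0 E1 E2]] := key a' l' H'.
    by move: E; rewrite E1 E2 => /mulfI => /(_ (lt0r_neq0 t0)) E; move: Hval; rewrite E ltxx.
  split.
    move=> /HNN [a' [l' [H' E]]]; have [t [t0 E1 E2]] := key a' l' H'.
    by move: E; rewrite E1 E2 ltr_pM2l // => E; move: Hval; rewrite ltNge ltW.
  split.
    move=> FS; move: HS; rewrite -FS => -[a' [l' [H' E]]]; have [t [t0 E1 E2]] := key a' l' H'.
    by move: E; rewrite E1 E2 ltr_pM2l // => E; move: Hval; rewrite ltNge ltW.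
  move=> y Gy; have [m [m0 m1 yE mt]] := Gtight y Gy.
  split; first by move: Gy; rewrite GE => -[].
  rewrite /= (conv_dot a m1 yE) -[RHS]mul1r -m1 mulr_suml; apply: eq_bigr => j _.
  have [->|mj] := eqVneq (m j) 0; first by rewrite !mul0r.
  by rewrite Htight ?mt // mem_nth.
move=> [F [Ffacet [nFF [nNN [nS GF]]]]].
have [a [l [[a0 [Ha FE]] vl]]] := Hoth F Ffacet nFF nNN nS.
split; last exact: Gdim.
pose t := (`|b - dotv v c| + 1) / (dotv v a - l).
have t0 : 0 <= t by apply: divr_ge0; [rewrite addr_ge0 | rewrite subr_ge0 ltW].
have tE : t * (dotv v a - l) = `|b - dotv v c| + 1 by rewrite /t divfK // subr_eq0 gt_eqF.
have bv : b - dotv v c <= `|b - dotv v c| by exact: ler_norm.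
have dE : forall x, dotv x (c + t *: a) = dotv x c + t * dotv x a.
  by move=> x; rewrite dotvDr dotvZr.
have Hv : b + t * l < dotv v (c + t *: a).
  by rewrite dE; move: tE; rewrite mulrBr; lra.
have HVq : forall p, p \in v :: V -> b + t * l <= dotv p (c + t *: a).
  move=> p; rewrite in_cons => /orP [/eqP ->|pV]; first exact: ltW.
  rewrite dE; have h1 := Hcb p (conv_mem pV); have h2 := Ha p (conv_mem pV).
  have : t * l <= t * dotv p a by rewrite ler_wpM2l.
  lra.
exists (c + t *: a), (b + t * l); split.
  by move=> x; apply: conv_ge.
apply/seteqP; split => x.
  move=> Gx; have := Gx; rewrite GE => -[xP xc]; split; first exact: conv_cons_sub.
  have : F x by exact: GF.
  by rewrite FE => -[_ xa]; rewrite /= dE xc xa.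
move=> [[m [m0 [m1 xE]]] xf].
have xP : conv V x.
  apply: (conv_cons_inv m0 m1 xE); apply/eqP/negP => /negP mv.
  have := conv_tight HVq m0 m1 xE xf mv; move: Hv => /[swap] /= ->; by rewrite ltxx.
rewrite GE; split => //=.
have h1 := Hcb x xP; have h2 := Ha x xP.
have : t * l <= t * dotv x a by rewrite ler_wpM2l.
move: xf; rewrite /= dE; lra.
Qed.
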